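(* Let $E$ be a finite-dimensional real affine space. An extended-real-valued function $h:E\to\overline{\mathbb{R}}$ is generalized affine if and only if one of the following holds: (a) $h(x)=+\infty$ for all $x\in E$; (b) $h(x)=-\infty$ for all $x\in E$; (c) $h$ is real-valued on all of $E$ and is an affine function; or (d) there is a hyperplane $H$ in $E$ such that $h(x)=+\infty$ for all points on one (open) side of $H$, $h(x)=-\infty$ for all points on the other side of $H$, and the restriction of $h$ to $H$ is a generalized affine function on $H$.
   Context: $\overline{\mathbb{R}}=\mathbb{R}\cup\{-\infty,+\infty\}$. A generalized affine function on an affine space is an extended-real-valued function that is both convex and concave in the sense of extended-real-valued convex analysis (convex: epigraph convex; concave: hypograph convex). *)

(* Defs.v *)
From HB Require Import structures.
From mathcomp Require Import all_boot all_order all_algebra.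
From mathcomp Require Import all_classical all_reals ereal.
Set Implicit Arguments. Unset Strict Implicit. Unset Printing Implicit Defensive.
Import Order.TTheory GRing.Theory Num.Theory.
Local Open Scope ring_scope.
Local Open Scope classical_set_scope.

(* The finite-dimensional real affine space E is modelled as R^n = 'rV[R]_n,
   with R : realType (any n-dimensional real affine space is affinely
   isomorphic to it). Extended reals are \bar R. *)

Section GenAffine.
Variables (R : realType) (n : nat).

Definition convex_set_prod (S : set ('rV[R]_n * R)) : Prop :=
  forall p q, S p -> S q -> forall t : R, 0 <= t <= 1 ->
    S ((1 - t) *: p.1 + t *: q.1, (1 - t) * p.2 + t * q.2).

Definition epi (A : set 'rV[R]_n) (h : 'rV[R]_n -> \bar R) :
  set ('rV[R]_n * R) := [set p | A p.1 /\ (h p.1 <= (p.2)%:E)%E].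
Definition hypo (A : set 'rV[R]_n) (h : 'rV[R]_n -> \bar R) :
  set ('rV[R]_n * R) := [set p | A p.1 /\ ((p.2)%:E <= h p.1)%E].

Definition convex_fun_on A h := convex_set_prod (epi A h).
Definition concave_fun_on A h := convex_set_prod (hypo A h).

Definition gen_affine_on (A : set 'rV[R]_n) (h : 'rV[R]_n -> \bar R) : Prop :=
  convex_fun_on A h /\ concave_fun_on A h.

Definition dotv (a x : 'rV[R]_n) : R := \sum_(i < n) a 0 i * x 0 i.

Definition hyperplane (a : 'rV[R]_n) (b : R) : set 'rV[R]_n :=
  [set x | dotv a x = b].
End GenAffine.

(* Main.v *)
Require Import Defs.
From HB Require Import structures.
From mathcomp Require Import all_boot all_order all_algebra.
From mathcomp Require Import all_classical all_reals ereal.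
From mathcomp Require Import ring lra.
From Stdlib Require Import Classical.
Import Order.TTheory GRing.Theory Num.Theory.
Local Open Scope ring_scope.
Local Open Scope classical_set_scope.

Section Aux.
Variable R : realType.

Definition convS {n} (P : set 'rV[R]_n) :=
  forall x y (t : R), 0 <= t <= 1 -> P x -> P y -> P ((1 - t) *: x + t *: y).

Lemma dotvD n (a x y : 'rV[R]_n) : dotv a (x + y) = dotv a x + dotv a y.
Proof. by rewrite /dotv -big_split /=; apply: eq_bigr => i _; rewrite mxE mulrDr. Qed.

Lemma dotvZ n (a x : 'rV[R]_n) c : dotv a (c *: x) = c * dotv a x.
Proof. by rewrite /dotv mulr_sumr; apply: eq_bigr => i _; rewrite mxE mulrCA. Qed.

Lemma dotv_comb n (a x y : 'rV[R]_n) t :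
  dotv a ((1 - t) *: x + t *: y) = (1 - t) * dotv a x + t * dotv a y.
Proof. by rewrite dotvD !dotvZ. Qed.

Lemma dotvN n (a x : 'rV[R]_n) : dotv (- a) x = - dotv a x.
Proof. by rewrite /dotv -sumrN; apply: eq_bigr => i _; rewrite mxE mulNr. Qed.

Definition cons {n} (s : R) (z : 'rV[R]_n) : 'rV[R]_(1 + n) :=
  row_mx (\row_(i < 1) s) z.

Lemma cons_comb n s1 s2 (z1 z2 : 'rV[R]_n) t :
  (1 - t) *: cons s1 z1 + t *: cons s2 z2 =
  cons ((1 - t) * s1 + t * s2) ((1 - t) *: z1 + t *: z2).
Proof.
rewrite /cons !scale_row_mx add_row_mx; congr row_mx.
by apply/rowP => i; rewrite !mxE.
Qed.

Lemma consE n (x : 'rV[R]_(1 + n)) : x = cons (x 0 (lshift n 0)) (rsubmx x).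
Proof.
rewrite -{1}(hsubmxK x) /cons; congr row_mx.
apply/rowP => i; rewrite !mxE ord1 /=.
by congr (x _ _); apply: val_inj.
Qed.
Arguments consE {n}.

Lemma dotv_cons n s s' (a z : 'rV[R]_n) :
  dotv (cons s a) (cons s' z) = s * s' + dotv a z.
Proof.
rewrite /dotv big_split_ord /= big_ord1; congr (_ + _).
  by rewrite /cons !row_mxEl !mxE.
by apply: eq_bigr => i _; rewrite /cons !row_mxEr.
Qed.

Lemma cons_neq0 n s (a : 'rV[R]_n) : a != 0 -> cons s a != 0.
Proof.
apply: contra => /eqP H; apply/eqP; apply/rowP => i.
by have := congr1 (fun v : 'rV_(1 + n) => v 0 (rshift 1 i)) H; rewrite /cons row_mxEr !mxE.
Qed.

Lemma cons1_neq0 n (a : 'rV[R]_n) : cons 1 a != 0.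
Proof.
apply/negP => /eqP H.
have := congr1 (fun v : 'rV_(1 + n) => v 0 (lshift n 0)) H.
by rewrite /cons row_mxEl !mxE; move/eqP; rewrite oner_eq0.
Qed.


Lemma affine_rep n (g : 'rV[R]_n -> R) :
  (forall x y (t : R), 0 <= t <= 1 -> g ((1 - t) *: x + t *: y) = (1 - t) * g x + t * g y) ->
  exists a b, forall x, g x = dotv a x + b.
Proof.
move=> Hg.
pose f x := g x - g 0.
have Hf : forall x y (t : R), 0 <= t <= 1 -> f ((1 - t) *: x + t *: y) = (1 - t) * f x + t * f y.
  by move=> x y t Ht; rewrite /f Hg //; ring.
have f0 : f 0 = 0 by rewrite /f subrr.
have fS : forall x (t : R), 0 <= t <= 1 -> f (t *: x) = t * f x.
  move=> x t Ht; have := Hf 0 x t Ht; rewrite scaler0 add0r f0 mulr0 add0r //.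
have fD : forall x y, f (x + y) = f x + f y.
  move=> x y.
  have h2 : 0 <= (2:R)^-1 <= 1 by apply/andP; split; lra.
  have := Hf x y _ h2.
  have -> : (1 - 2^-1) *: x + 2^-1 *: y = 2^-1 *: (x + y).
    by apply/rowP => i; rewrite !mxE; lra.
  rewrite fS //; lra.
have fN : forall x, f (- x) = - f x.
  by move=> x; have := fD x (- x); rewrite subrr f0; lra.
have fZ : forall x (t : R), f (t *: x) = t * f x.
  move=> x t.
  have pos : forall t : R, 0 <= t -> f (t *: x) = t * f x.
    move=> u u0; have [u1|u1] := lerP u 1; first by rewrite fS // u0 u1.
    have u0' : u != 0 by apply/eqP => E; rewrite E in u1; lra.
    have := fS (u *: x) u^-1.
    rewrite scalerA mulVf // scale1r => H.
    have Hu : 0 <= u^-1 <= 1.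
      apply/andP; split; first by rewrite invr_ge0.
      by rewrite invf_le1 ?ltW //; lra.
    have := H Hu => E.
    by rewrite E mulrA mulfV // mul1r.
  have [t0|t0] := lerP 0 t; first exact: pos.
  have -> : t *: x = - ((- t) *: x) by rewrite scaleNr opprK.
  by rewrite fN pos ?oppr_ge0 ?ltW //; ring.
exists (\row_i f (delta_mx 0 i)), (g 0) => x.
have -> : g x = f x + g 0 by rewrite /f; ring.
congr (_ + _).
rewrite {1}(row_sum_delta x).
rewrite (@big_morph R _ f 0 +%R 0 +%R fD f0).
rewrite /dotv; apply: eq_bigr => i _.
by rewrite fZ mxE mulrC.
Qed.


Definition hemi_concl {n} (P : set 'rV[R]_n) := exists a b, a != 0 /\
  forall x, (b < dotv a x -> P x) /\ (dotv a x < b -> ~ P x).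

Lemma hemi_neg n (P : set 'rV[R]_n) : hemi_concl (~` P) -> hemi_concl P.
Proof.
move=> [a [b [a0 H]]]; exists (- a), (- b); split; first by rewrite oppr_eq0.
move=> x; rewrite dotvN; have [H1 H2] := H x; split.
  by move=> h; apply: NNPP; apply: H2; rewrite -ltrN2.
by move=> h; apply: H1; rewrite -ltrN2.
Qed.

Lemma stepZ n
  (IH : forall P : set 'rV[R]_n, convS P -> convS (~` P) -> (exists p, P p) ->
        (exists q, ~ P q) -> hemi_concl P)
  (P : set 'rV[R]_(1 + n)) :
  convS P -> convS (~` P) -> (exists q, ~ P q) ->
  (exists z, forall s, P (cons s z)) -> hemi_concl P.
Proof.
move=> cP cQ [q nq] [z0 Hz0].
pose ZP := [set z | forall s, P (cons s z)].
have cZ : convS ZP.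
  move=> z1 z2 t Ht H1 H2 s.
  have -> : cons s ((1 - t) *: z1 + t *: z2) = (1 - t) *: cons s z1 + t *: cons s z2.
    by rewrite cons_comb; congr cons; ring.
  exact: cP.
have cZ' : convS (~` ZP).
  move=> z1 z2 t Ht H1 H2.
  have [s1 ns1] := not_all_ex_not _ _ H1.
  have [s2 ns2] := not_all_ex_not _ _ H2.
  move=> Hall; apply: (cQ _ _ t Ht ns1 ns2).
  by rewrite cons_comb; apply: Hall.
have [a0 [b0 [a00 Hab]]] : hemi_concl ZP.
  apply: IH => //; first by exists z0.
  exists (rsubmx q) => Hq; apply: nq; rewrite (consE q); exact: Hq.
exists (cons 0 a0), b0; split; first exact: cons_neq0.
move=> x; rewrite (consE x) dotv_cons mul0r add0r.
set s := x 0 _; set z := rsubmx x.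
have [Hab1 Hab2] := Hab z.
split; first by move=> h; apply: Hab1.
move=> Az Pz.
have B0 : b0 <= dotv a0 z0.
  by rewrite leNgt; apply/negP => h; apply: (proj2 (Hab z0) h).
set A := dotv a0 z in Az *; set B := dotv a0 z0 in B0 *.
have dpos : 0 < B - A by lra.
pose mu := (b0 - A) / (2 * (B - A)).
have mu0 : 0 < mu by apply: divr_gt0; lra.
have mu1 : mu <= 1.
  rewrite /mu ler_pdivrMr; last lra.
  lra.
have mueq : mu * (B - A) = (b0 - A) / 2.
  rewrite /mu; field; lra.
pose zm := (1 - mu) *: z + mu *: z0.
have Zm : ZP zm.
  move=> s'.
  have -> : cons s' zm = (1 - mu) *: cons s z + mu *: cons ((s' - (1 - mu) * s) / mu) z0.
    rewrite cons_comb; congr cons; field; lra.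
  apply: cP => //; first by apply/andP; split; lra.
have : dotv a0 zm < b0.
  rewrite /zm dotv_comb -/A -/B.
  have -> : (1 - mu) * A + mu * B = A + mu * (B - A) by ring.
  rewrite mueq; lra.
by move/(proj2 (Hab zm)).
Qed.


Lemma stepT n (P : set 'rV[R]_(1 + n)) :
  convS P -> convS (~` P) ->
  (forall z, (exists s, P (cons s z)) /\ (exists s, ~ P (cons s z))) ->
  (exists z s0 s1, s0 < s1 /\ ~ P (cons s0 z) /\ P (cons s1 z)) -> hemi_concl P.
Proof.
move=> cP cQ Hcr [z0 [s0 [s1 [s01 [Q0 P1]]]]].
have mono : forall z s s', s <= s' -> P (cons s z) -> P (cons s' z).
  move=> z s s' ss' Ps; apply: NNPP => Qs'.
  have ss : s < s'.
    rewrite lt_neqAle ss' andbT; apply/negP => /eqP E; rewrite E in Ps; exact: Qs' Ps.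
  pose d := s' - s; pose de := s1 - s0.
  have d0 : 0 < d by rewrite /d; lra.
  have de0 : 0 < de by rewrite /de; lra.
  pose be := d / (d + de).
  have be0 : 0 < be by apply: divr_gt0; lra.
  have be1 : be < 1 by rewrite /be ltr_pdivrMr; lra.
  have m1 : P ((1 - be) *: cons s z + be *: cons s1 z0).
    by apply: cP => //; apply/andP; split; lra.
  have m2 : (~` P) ((1 - (1 - be)) *: cons s0 z0 + (1 - be) *: cons s' z).
    by apply: cQ => //; apply/andP; split; lra.
  apply: m2; move: m1; rewrite !cons_comb.
  have -> : (1 - be) * s + be * s1 = (1 - (1 - be)) * s0 + (1 - be) * s'.
    rewrite /be /d /de; field; lra.
  have -> : (1 - be) *: z + be *: z0 = (1 - (1 - be)) *: z0 + (1 - be) *: z.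
    by apply/rowP => i; rewrite !mxE; ring.
  by [].
pose S z := [set s | ~ P (cons s z)].
pose tau z := sup (S z).
have hs : forall z, has_sup (S z).
  move=> z; have [[sp Pp] [sq Qq]] := Hcr z; split; first by exists sq.
  exists sp => s Ss; rewrite leNgt; apply/negP => h; apply: Ss; apply: (mono _ sp) => //.
  exact: ltW.
have tauP : forall z s, tau z < s -> P (cons s z).
  move=> z s h; apply: NNPP => Qs.
  have := sup_upper_bound (hs z) Qs; rewrite -/(tau z); lra.
have tauQ : forall z s, s < tau z -> ~ P (cons s z).
  move=> z s h Ps.
  have eps0 : 0 < tau z - s by lra.
  have [e Se He] := sup_adherent eps0 (hs z).
  apply: Se; apply: (mono _ s) => //; rewrite -/(tau z) in He; lra.
have taff : forall x y (t : R), 0 <= t <= 1 ->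
    tau ((1 - t) *: x + t *: y) = (1 - t) * tau x + t * tau y.
  move=> z1 z2 t Ht.
  set z := (1 - t) *: z1 + t *: z2; set c := (1 - t) * tau z1 + t * tau z2.
  apply/eqP; rewrite eq_le; apply/andP; split.
    rewrite leNgt; apply/negP => h.
    pose e := (tau z - c) / 2.
    have e0 : 0 < e by rewrite /e; lra.
    have H1 := tauP z1 (tau z1 + e) ltac:(lra).
    have H2 := tauP z2 (tau z2 + e) ltac:(lra).
    have := cP _ _ t Ht H1 H2; rewrite cons_comb -/z.
    apply: tauQ; rewrite /e; move: Ht => /andP[Ht0 Ht1].
    have -> : (1 - t) * (tau z1 + (tau z - c) / 2) + t * (tau z2 + (tau z - c) / 2)
      = c + (tau z - c) / 2 by rewrite /c; field.
    lra.
  rewrite leNgt; apply/negP => h.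
  pose e := (c - tau z) / 2.
  have e0 : 0 < e by rewrite /e; lra.
  have H1 := tauQ z1 (tau z1 - e) ltac:(lra).
  have H2 := tauQ z2 (tau z2 - e) ltac:(lra).
  have := cQ _ _ t Ht H1 H2; rewrite /setC /= cons_comb -/z; apply.
  apply: tauP; rewrite /e.
  have -> : (1 - t) * (tau z1 - (c - tau z) / 2) + t * (tau z2 - (c - tau z) / 2)
    = c - (c - tau z) / 2 by rewrite /c; field.
  lra.
have [c [d Hcd]] := @affine_rep n tau taff.
exists (cons 1 (- c)), d; split; first exact: cons1_neq0.
move=> x; rewrite (consE x) dotv_cons mul1r dotvN.
set s := x 0 _; set z := rsubmx x.
split => h.
  by apply: tauP; rewrite Hcd; lra.
by apply: tauQ; rewrite Hcd; lra.
Qed.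


Lemma hemi n (P : set 'rV[R]_n) : convS P -> convS (~` P) -> (exists p, P p) ->
  (exists q, ~ P q) -> hemi_concl P.
Proof.
elim: n P => [|n IH] P cP cQ [p Pp] [q Qq].
  by exfalso; apply: Qq; rewrite (thinmx0 q) -(thinmx0 p).
have cQ' : convS (~` (~` P)) by rewrite setCK.
have [[z Hz]|nZP] := classic (exists z, forall s, P (cons s z)).
  by apply: (@stepZ n IH P) => //; [exists q | exists z].
have [[z Hz]|nZQ] := classic (exists z, forall s, ~ P (cons s z)).
  apply: hemi_neg; apply: (@stepZ n IH (~` P)) => //.
    by exists p => /(_ Pp).
  by exists z.
have Hcr : forall z, (exists s, P (cons s z)) /\ (exists s, ~ P (cons s z)).
  move=> z; split.
    apply: NNPP => H; apply: nZQ; exists z => s Ps; apply: H; by exists s.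
  apply: NNPP => H; apply: nZP; exists z => s; apply: NNPP => Ps; apply: H; by exists s.
have [[sp Psp] [sq Qsq]] := Hcr 0.
have [spq|spq|spq] := ltgtP sp sq.
- apply: hemi_neg; apply: (@stepT n (~` P)) => //.
    move=> z; have [[a Ha] [b Hb]] := Hcr z; split; first by exists b.
    by exists a => /(_ Ha).
  by exists 0, sp, sq; split => //; split => // /(_ Psp).
- by apply: (@stepT n P) => //; exists 0, sq, sp.
- by exfalso; apply: Qsq; rewrite -spq.
Qed.


Lemma le_all_ninf (e : \bar R) : (forall r : R, (e <= r%:E)%E) -> e = -oo%E.
Proof.
case: e => [r||] H //.
  by have := H (r - 1)%R; rewrite lee_fin => ?; exfalso; lra.
by have := H 0.
Qed.

Lemma ge_all_pinf (e : \bar R) : (forall r : R, (r%:E <= e)%E) -> e = +oo%E.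
Proof.
case: e => [r||] H //.
  by have := H (r + 1)%R; rewrite lee_fin => ?; exfalso; lra.
by have := H 0.
Qed.

Lemma nottop_le {e : \bar R} : e <> +oo%E -> exists r : R, (e <= r%:E)%E.
Proof.
case: e => [r||] H //; first by exists r.
by exists 0; rewrite leNye.
Qed.

Lemma notbot_ge {e : \bar R} : e <> -oo%E -> exists r : R, (r%:E <= e)%E.
Proof.
case: e => [r||] H //; first by exists r.
by exists 0; rewrite leey.
Qed.

Section H.
Variables (n : nat) (h : 'rV[R]_n -> \bar R).
Hypothesis G : gen_affine_on setT h.

Lemma epi_comb {x y r1 r2} {t : R} : 0 <= t <= 1 ->
  (h x <= r1%:E)%E -> (h y <= r2%:E)%E ->
  (h ((1 - t) *: x + t *: y) <= ((1 - t) * r1 + t * r2)%:E)%E.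
Proof.
move=> Ht H1 H2.
by have [] := (proj1 G) (x, r1) (y, r2) (conj I H1) (conj I H2) t Ht.
Qed.

Lemma hypo_comb {x y r1 r2} {t : R} : 0 <= t <= 1 ->
  (r1%:E <= h x)%E -> (r2%:E <= h y)%E ->
  (((1 - t) * r1 + t * r2)%:E <= h ((1 - t) *: x + t *: y))%E.
Proof.
move=> Ht H1 H2.
by have [] := (proj2 G) (x, r1) (y, r2) (conj I H1) (conj I H2) t Ht.
Qed.

Lemma convP : convS [set x | h x = +oo%E].
Proof.
move=> x y t Ht /= Hx Hy; apply: ge_all_pinf => r.
have := @hypo_comb x y r r t Ht; rewrite Hx Hy !leey => /(_ isT isT).
by have -> : (1 - t) * r + t * r = r by ring.
Qed.

Lemma convC1 : convS (~` [set x | h x = +oo%E]).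
Proof.
move=> x y t Ht /= Hx Hy.
have [r1 H1] := nottop_le Hx; have [r2 H2] := nottop_le Hy.
have := epi_comb Ht H1 H2 => H E; move: H; rewrite E.
by [].
Qed.

Lemma absorbM w u (t : R) : 0 <= t < 1 -> h w = -oo%E -> h u <> +oo%E ->
  h ((1 - t) *: w + t *: u) = -oo%E.
Proof.
move=> /andP[t0 t1] Hw Hu; have [ru Hru] := nottop_le Hu.
apply: le_all_ninf => r.
have Ht : 0 <= t <= 1 by apply/andP; split; lra.
have Hw' : (h w <= ((r - t * ru) / (1 - t))%:E)%E by rewrite Hw leNye.
have := epi_comb Ht Hw' Hru.
have -> : (1 - t) * ((r - t * ru) / (1 - t)) + t * ru = r by field; lra.
by [].
Qed.

Lemma absorbP w u (t : R) : 0 <= t < 1 -> h w = +oo%E -> h u <> -oo%E ->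
  h ((1 - t) *: w + t *: u) = +oo%E.
Proof.
move=> /andP[t0 t1] Hw Hu; have [ru Hru] := notbot_ge Hu.
apply: ge_all_pinf => r.
have Ht : 0 <= t <= 1 by apply/andP; split; lra.
have Hw' : (((r - t * ru) / (1 - t))%:E <= h w)%E by rewrite Hw leey.
have := hypo_comb Ht Hw' Hru.
have -> : (1 - t) * ((r - t * ru) / (1 - t)) + t * ru = r by field; lra.
by [].
Qed.

Lemma midE (x w : 'rV[R]_n) : (1 - 2^-1) *: w + 2^-1 *: (2 *: x - w) = x.
Proof. by apply/rowP => i; rewrite !mxE; field. Qed.

Lemma reflM x w : h x <> +oo%E -> h x <> -oo%E -> h w = -oo%E ->
  h (2 *: x - w) = +oo%E.
Proof.
move=> H1 H2 Hw; apply: NNPP => Hu; apply: H2.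
rewrite -(midE x w); apply: absorbM => //; apply/andP; split.
  by rewrite invr_ge0 ler0n.
by rewrite invf_lt1 ?ltr0n // ltr1n.
Qed.

Lemma reflP x y : h x <> +oo%E -> h x <> -oo%E -> h y = +oo%E ->
  h (2 *: x - y) = -oo%E.
Proof.
move=> H1 H2 Hy; apply: NNPP => Hu; apply: H1.
rewrite -(midE x y); apply: absorbP => //; apply/andP; split.
  by rewrite invr_ge0 ler0n.
by rewrite invf_lt1 ?ltr0n // ltr1n.
Qed.

Lemma restrict (A : set 'rV[R]_n) : convS A -> gen_affine_on A h.
Proof.
move=> cA; split.
  move=> [x r1] [y r2] /= [A1 H1] [A2 H2] t Ht; split; first exact: cA.
  exact: epi_comb.
move=> [x r1] [y r2] /= [A1 H1] [A2 H2] t Ht; split; first exact: cA.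
exact: hypo_comb.
Qed.

End H.


Lemma fin_eq (e : \bar R) : e <> +oo%E -> e <> -oo%E -> e = (fine e)%:E.
Proof. by case: e. Qed.

End Aux.
Arguments epi_comb {R n h} G {x y r1 r2 t}.
Arguments hypo_comb {R n h} G {x y r1 r2 t}.
Arguments absorbM {R n h} G {w u t}.

Theorem theorem1 (R : realType) (n : nat) (h : 'rV[R]_n -> \bar R) :
  gen_affine_on setT h <->
  [\/ (forall x, h x = +oo%E),
      (forall x, h x = -oo%E),
      (exists (a : 'rV[R]_n) (b : R), forall x, h x = (dotv a x + b)%:E)
    | (exists (a : 'rV[R]_n) (b : R),
         a != 0 /\
         (forall x, dotv a x > b -> h x = +oo%E) /\
         (forall x, dotv a x < b -> h x = -oo%E) /\
         gen_affine_on (hyperplane a b) h)].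
Proof.
split.
  move=> G.
  have [Ha|Ha] := classic (forall x, h x = +oo%E); first by apply: Or41.
  have [Hb|Hb] := classic (forall x, h x = -oo%E); first by apply: Or42.
  have [Hc|Hc] := classic (forall x, h x <> +oo%E /\ h x <> -oo%E).
    apply: Or43.
    pose g x := fine (h x).
    have hg : forall x, h x = (g x)%:E by move=> x; have [] := Hc x; exact: fin_eq.
    have gaff : forall x y (t : R), 0 <= t <= 1 ->
        g ((1 - t) *: x + t *: y) = (1 - t) * g x + t * g y.
      move=> x y t Ht; apply/eqP; rewrite eq_le; apply/andP; split.
        have e1 : (h x <= (g x)%:E)%E by rewrite hg.
        have e2 : (h y <= (g y)%:E)%E by rewrite hg.
        by have := epi_comb G Ht e1 e2; rewrite hg lee_fin.
      have e1 : ((g x)%:E <= h x)%E by rewrite hg.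
      have e2 : ((g y)%:E <= h y)%E by rewrite hg.
      by have := hypo_comb G Ht e1 e2; rewrite hg lee_fin.
    have [a [b Hab]] := @affine_rep R n g gaff.
    by exists a, b => x; rewrite hg Hab.
  apply: Or44.
  have [x0 Hx0] := not_all_ex_not _ _ Hc.
  have [x1 Hx1] := not_all_ex_not _ _ Ha.
  have [x2 Hx2] := not_all_ex_not _ _ Hb.
  have [y Hy] : exists y, h y = +oo%E.
    have [E|E] := classic (h x0 = +oo%E); first by exists x0.
    have E' : h x0 = -oo%E by apply: NNPP => E'; apply: Hx0.
    have [E2|E2] := classic (h x2 = +oo%E); first by exists x2.
    by exists (2 *: x2 - x0); apply: reflM.
  have [w Hw] : exists w, h w = -oo%E.
    have [E|E] := classic (h x0 = -oo%E); first by exists x0.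
    have E' : h x0 = +oo%E by apply: NNPP => E'; apply: Hx0.
    have [E2|E2] := classic (h x1 = -oo%E); first by exists x1.
    by exists (2 *: x1 - x0); apply: reflP.
  have [a [b [a0 Hab]]] : @hemi_concl R n [set x | h x = +oo%E].
    apply: hemi.
    - exact: (@convP R n h G).
    - exact: (@convC1 R n h G).
    - by exists y.
    - by exists w => /=; rewrite Hw.
  exists a, b; split => //; split; first by move=> x /(proj1 (Hab x)).
  split.
    move=> x Ax.
    have nP : h x <> +oo%E by apply: (proj2 (Hab x)).
    apply: NNPP => nM.
    have By : b <= dotv a y.
      by rewrite leNgt; apply/negP => /(proj2 (Hab y)).
    set A := dotv a x in Ax *; set B := dotv a y in By *.
    have dpos : 0 < B - A by lra.
    pose mu := (b - A) / (2 * (B - A)).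
    have mu0 : 0 < mu by apply: divr_gt0; lra.
    have mueq : mu * (B - A) = (b - A) / 2.
      rewrite /mu. field. clear -dpos. lra.
    pose v := (1 - mu) *: x + mu *: y.
    have Av : dotv a v < b.
      rewrite /v dotv_comb -/A -/B.
      have -> : (1 - mu) * A + mu * B = A + mu * (B - A) by ring.
      rewrite mueq; lra.
    have nPv : h v <> +oo%E by apply: (proj2 (Hab v)).
    have Hu : h (2 *: x - y) = -oo%E by apply: reflP.
    pose la := (1 + mu)^-1.
    have la01 : 0 <= la < 1.
      apply/andP; split; first by rewrite invr_ge0; lra.
      by rewrite invf_lt1; lra.
    have := absorbM G la01 Hu nPv.
    have -> : (1 - la) *: (2 *: x - y) + la *: v = x.
      apply/rowP => i; rewrite /v /la !mxE; field; clear -mu0; lra.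
    exact: nM.
  apply: restrict => // x1' x2' t Ht /= H1 H2.
  by rewrite /hyperplane /= dotv_comb H1 H2; ring.
case=> [Ha|Hb|[a [b Hc]]|[a [b [a0 [Hp [Hm Hh]]]]]].
- split; move=> [x r1] [y r2] /= [_ H1] [_ H2] t Ht; split => //.
    by move: H1; rewrite Ha.
  by rewrite Ha leey.
- split; move=> [x r1] [y r2] /= [_ H1] [_ H2] t Ht; split => //.
    by rewrite Hb leNye.
  by move: H1; rewrite Hb.
- split; move=> [x r1] [y r2] /= [_ H1] [_ H2] t Ht; split => //;
    move: H1 H2; rewrite !Hc /= !lee_fin dotv_comb => H1 H2; move: Ht => /andP[t0 t1]; nra.
- split; move=> [x r1] [y r2] /= [_ H1] [_ H2] t Ht; split => //=.
    have Ax : dotv a x <= b.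
      by rewrite leNgt; apply/negP => /Hp Hx; move: H1; rewrite Hx.
    have Ay : dotv a y <= b.
      by rewrite leNgt; apply/negP => /Hp Hy; move: H2; rewrite Hy.
    have [Hz|Hz] := ltP (dotv a ((1 - t) *: x + t *: y)) b.
      by rewrite Hm // leNye.
    have Ht' := Ht; move: Ht' => /andP[t0 t1].
    have [E|tn0] := eqVneq t 0.
      by rewrite E subr0 scale1r scale0r addr0 mul1r mul0r addr0.
    have [E|tn1] := eqVneq t 1.
      by rewrite E subrr scale0r add0r scale1r mul0r add0r mul1r.
    have tp : 0 < t by rewrite lt_neqAle eq_sym tn0.
    have tl : t < 1 by rewrite lt_neqAle tn1.
    rewrite dotv_comb in Hz.
    have ex : dotv a x = b by apply/eqP; rewrite eq_le Ax /=; nra.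
    have ey : dotv a y = b by apply/eqP; rewrite eq_le Ay /=; nra.
    by have [] := (proj1 Hh) (x, r1) (y, r2) (conj ex H1) (conj ey H2) t Ht.
  have Ax : b <= dotv a x.
    by rewrite leNgt; apply/negP => /Hm Hx; move: H1; rewrite Hx.
  have Ay : b <= dotv a y.
    by rewrite leNgt; apply/negP => /Hm Hy; move: H2; rewrite Hy.
  have [Hz|Hz] := ltP b (dotv a ((1 - t) *: x + t *: y)).
    by rewrite Hp // leey.
  have Ht' := Ht; move: Ht' => /andP[t0 t1].
  have [E|tn0] := eqVneq t 0.
    by rewrite E subr0 scale1r scale0r addr0 mul1r mul0r addr0.
  have [E|tn1] := eqVneq t 1.
    by rewrite E subrr scale0r add0r scale1r mul0r add0r mul1r.
  have tp : 0 < t by rewrite lt_neqAle eq_sym tn0.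
  have tl : t < 1 by rewrite lt_neqAle tn1.
  rewrite dotv_comb in Hz.
  have ex : dotv a x = b by apply/eqP; rewrite eq_le Ax andbT; nra.
  have ey : dotv a y = b by apply/eqP; rewrite eq_le Ay andbT; nra.
  by have [] := (proj2 Hh) (x, r1) (y, r2) (conj ex H1) (conj ey H2) t Ht.
Qed.
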